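(* Let $P$ be a subpath of $\mathrm{OPT}$ whose two end-points $p,q$ both lie to the right of a vertical line $\Gamma$, and suppose $P$ crosses $\Gamma$. Then the left-most point of $P$ (which lies to the left of $\Gamma$) is a right reflection point. (Symmetrically, with left and right exchanged.)
   Context: Instance: vertical line segments $s_1,\dots,s_n$ in $\mathbb{R}^2$, each of length $1$, with pairwise distinct $x$-coordinates; $x(\cdot),y(\cdot)$ denote coordinates. A tour is a cyclic sequence of points $p_1,\dots,p_\sigma$, each on some segment, with every segment containing at least one $p_j$; the straight segments joining consecutive points are legs; cost is total length. $\mathrm{OPT}$ is a fixed minimum-cost tour, oriented $p_1\to p_2\to\cdots\to p_\sigma\to p_1$, with the standing assumptions that no two consecutive points lie on the same segment (no leg is vertical), that no horizontal line crosses all segments, and that $\mathrm{OPT}$ is not self-crossing. For a point $p_j$ of $\mathrm{OPT}$ on segment $s$, a leg incident to $p_j$ is to the left of $s$ if it lies in the half-plane $x\le x(s)$ and to the right of $s$ if it lies in $x\ge x(s)$. $p_j$ is a left (resp. right) reflection point if both of its incident legs are to the left (resp. right) of $s$. *)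

(* Defs.v *)
From HB Require Import structures.
From mathcomp Require Import all_boot all_order all_algebra.
From mathcomp Require Import reals.
Set Implicit Arguments. Unset Strict Implicit. Unset Printing Implicit Defensive.
Import Order.TTheory GRing.Theory Num.Theory.
Local Open Scope ring_scope.

Section Defs.
Variable R : realType.
Notation pt := (R * R)%type.

Definition dist (p q : pt) : R :=
  Num.sqrt ((p.1 - q.1) ^+ 2 + (p.2 - q.2) ^+ 2).

Definition lerp (p q : pt) (l : R) : pt :=
  ((1 - l) * p.1 + l * q.1, (1 - l) * p.2 + l * q.2).

Definition on_seg n (sx sy : 'I_n -> R) (i : 'I_n) (p : pt) : Prop :=
  p.1 = sx i /\ sy i <= p.2 <= sy i + 1.

(* A tour is a cyclic sequence t = [p_0; ...; p_(sigma-1)] (index j taken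
   mod sigma); consecutive points form the legs. *)
Definition tpt (t : seq pt) (j : nat) : pt := nth (0, 0) t (j %% size t).

Definition is_tour n (sx sy : 'I_n -> R) (t : seq pt) : Prop :=
  (0 < size t)%N /\
  (forall j, (j < size t)%N -> exists i, on_seg sx sy i (tpt t j)) /\
  (forall i, exists j, (j < size t)%N /\ on_seg sx sy i (tpt t j)).

Definition cost (t : seq pt) : R :=
  \sum_(j < size t) dist (tpt t j) (tpt t j.+1).

(* orientation (twice the signed area) *)
Definition orient (a b c : pt) : R :=
  (b.1 - a.1) * (c.2 - a.2) - (b.2 - a.2) * (c.1 - a.1).

Definition proper_cross (a b c d : pt) : Prop :=
  orient a b c * orient a b d < 0 /\ orient c d a * orient c d b < 0.

Definition self_crossing (t : seq pt) : Prop :=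
  exists j k, [/\ (j < size t)%N, (k < size t)%N &
    proper_cross (tpt t j) (tpt t j.+1) (tpt t k) (tpt t k.+1)].

Definition leg_right_of (p q : pt) (c : R) : Prop :=
  forall l, 0 <= l <= 1 -> c <= (lerp p q l).1.
Definition leg_left_of (p q : pt) (c : R) : Prop :=
  forall l, 0 <= l <= 1 -> (lerp p q l).1 <= c.

Definition tprev (t : seq pt) (j : nat) : nat := (j + size t).-1.

Definition right_reflection n (sx sy : 'I_n -> R) (t : seq pt) (j : nat) : Prop :=
  exists i, [/\ on_seg sx sy i (tpt t j),
    leg_right_of (tpt t (tprev t j)) (tpt t j) (sx i) &
    leg_right_of (tpt t j) (tpt t j.+1) (sx i)].

Definition left_reflection n (sx sy : 'I_n -> R) (t : seq pt) (j : nat) : Prop :=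
  exists i, [/\ on_seg sx sy i (tpt t j),
    leg_left_of (tpt t (tprev t j)) (tpt t j) (sx i) &
    leg_left_of (tpt t j) (tpt t j.+1) (sx i)].

(* OPT together with the standing assumptions *)
Definition is_OPT n (sx sy : 'I_n -> R) (t : seq pt) : Prop :=
  [/\ is_tour sx sy t,
      (forall t', is_tour sx sy t' -> cost t <= cost t'),
      (forall j i, (j < size t)%N -> on_seg sx sy i (tpt t j) ->
          ~ on_seg sx sy i (tpt t j.+1)),
      ~ (exists y, forall i, sy i <= y <= sy i + 1) &
      ~ self_crossing t].

(* The subpath P of t starting at index a with L legs:
   vertices tpt t (a+m), 0 <= m <= L; a point of P is a point of one of its legs. *)
Definition subpath_point (t : seq pt) (a L : nat) (z : pt) : Prop :=
  exists m l, [/\ (m < L)%N, 0 <= l <= 1 &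
    z = lerp (tpt t (a + m)) (tpt t (a + m).+1) l].
End Defs.

(* Main.v *)
Require Import Defs.
From HB Require Import structures.
From mathcomp Require Import all_boot all_order all_algebra.
From mathcomp Require Import reals.
From mathcomp Require Import lra zify.
Import Order.TTheory GRing.Theory Num.Theory.
Local Open Scope ring_scope.

Lemma tpt_mod (R : realType) (t : seq (R*R)) j : tpt t (j %% size t) = tpt t j.
Proof. by rewrite /tpt modn_mod. Qed.

Lemma tpt_prev (R : realType) (t : seq (R*R)) b : (0 < size t)%N ->
  tpt t (tprev t (b.+1 %% size t)) = tpt t b.
Proof.
move=> s0; rewrite /tprev /tpt.
have -> : (((b.+1 %% size t + size t).-1) = b.+1 %% size t + (size t).-1)%N by lia.
rewrite modnDml.
have -> : (b.+1 + (size t).-1 = b + size t)%N by lia.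
by rewrite modnDr.
Qed.

Lemma tpt_next (R : realType) (t : seq (R*R)) j :
  tpt t (j %% size t).+1 = tpt t j.+1.
Proof. by rewrite /tpt -addn1 modnDml addn1. Qed.

Lemma argmin_nat (R : realType) (f : nat -> R) (N : nat) :
  exists m, (m <= N)%N /\ forall k, (k <= N)%N -> f m <= f k.
Proof.
elim: N => [|N [m [hm IH]]]; first by exists 0%N; split=> // k; rewrite leqn0 => /eqP->.
have [h|h] := lerP (f m) (f N.+1).
  exists m; split; first by lia.
  move=> k; rewrite leq_eqVlt ltnS => /orP[/eqP->//|]; exact: IH.
exists N.+1; split=> // k; rewrite leq_eqVlt ltnS => /orP[/eqP->//|/IH].
move=> hk; apply: le_trans hk; exact: ltW.
Qed.

Lemma lerp1 (R : realType) (p q : R*R) l : (lerp p q l).1 = (1 - l) * p.1 + l * q.1.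
Proof. by []. Qed.

Theorem lemma1 (R : realType) (n : nat) (sx sy : 'I_n -> R) (t : seq (R * R)) :
  injective sx -> is_OPT sx sy t ->
  forall (a L : nat) (c : R),
    (a < size t)%N -> (0 < L)%N -> (L <= size t)%N ->
  ((c < (tpt t a).1 -> c < (tpt t (a + L)).1 ->
     (exists z, subpath_point t a L z /\ z.1 < c) ->
     (exists m, (m <= L)%N /\
        forall z, subpath_point t a L z -> (tpt t (a + m)).1 <= z.1) /\
     (forall m, (m <= L)%N ->
        (forall z, subpath_point t a L z -> (tpt t (a + m)).1 <= z.1) ->
        (tpt t (a + m)).1 < c /\ right_reflection sx sy t ((a + m) %% size t)))
  /\
   ((tpt t a).1 < c -> (tpt t (a + L)).1 < c ->
     (exists z, subpath_point t a L z /\ c < z.1) ->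
     (exists m, (m <= L)%N /\
        forall z, subpath_point t a L z -> z.1 <= (tpt t (a + m)).1) /\
     (forall m, (m <= L)%N ->
        (forall z, subpath_point t a L z -> z.1 <= (tpt t (a + m)).1) ->
        c < (tpt t (a + m)).1 /\ left_reflection sx sy t ((a + m) %% size t)))).
Proof.
move=> _ [[s0 [onS _]] _ _ _ _] a L c aS L0 LS.
split=> [ca cL [z0 [z0P z0c]] | ca cL [z0 [z0P z0c]]].
- split.
    have [m [mL hm]] := @argmin_nat R (fun k => (tpt t (a + k)).1) L.
    exists m; split=> // z [k [l [kL l01 ->]]].
    rewrite lerp1 -addnS.
    have h1 := hm k (ltnW kL); have h2 := hm k.+1 kL.
    move: l01 => /andP[l0 l1]; nra.
  move=> m mL hm.
  have fc : (tpt t (a + m)).1 < c by apply: le_lt_trans (hm _ z0P) z0c.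
  split=> //.
  have m0 : (0 < m)%N by case: m {hm} mL fc => //; rewrite addn0 => _ h; lra.
  have mL' : (m < L)%N.
    rewrite ltn_neqAle mL andbT; apply/negP => /eqP E; move: fc; rewrite E; lra.
  have [i hi] := onS _ (ltn_pmod (a + m) s0).
  exists i; split=> //.
  + move=> l l01; rewrite tpt_mod.
    have [/= hx _] := hi; rewrite tpt_mod in hx; rewrite -hx.
    apply: (hm (lerp (tpt t (tprev t ((a+m) %% size t))) (tpt t (a+m)) l)).
    exists m.-1, l; split=> //; first by lia.
    have E : (a + m = (a + m.-1).+1)%N by lia.
    by rewrite E tpt_prev.
  + move=> l l01; rewrite tpt_next tpt_mod.
    have [/= hx _] := hi; rewrite tpt_mod in hx; rewrite -hx.
    apply: (hm (lerp (tpt t (a+m)) (tpt t (a+m).+1) l)).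
    by exists m, l.
- split.
    have [m [mL hm]] := @argmin_nat R (fun k => - (tpt t (a + k)).1) L.
    exists m; split=> // z [k [l [kL l01 ->]]].
    rewrite lerp1 -addnS.
    have h1 := hm k (ltnW kL); have h2 := hm k.+1 kL.
    move: l01 => /andP[l0 l1] /=; rewrite /= in h1 h2; nra.
  move=> m mL hm.
  have fc : c < (tpt t (a + m)).1 by apply: lt_le_trans (hm _ z0P).
  split=> //.
  have m0 : (0 < m)%N by case: m {hm} mL fc => //; rewrite addn0 => _ h; lra.
  have mL' : (m < L)%N.
    rewrite ltn_neqAle mL andbT; apply/negP => /eqP E; move: fc; rewrite E; lra.
  have [i hi] := onS _ (ltn_pmod (a + m) s0).
  exists i; split=> //.
  + move=> l l01; rewrite tpt_mod.
    have [/= hx _] := hi; rewrite tpt_mod in hx; rewrite -hx.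
    apply: (hm (lerp (tpt t (tprev t ((a+m) %% size t))) (tpt t (a+m)) l)).
    exists m.-1, l; split=> //; first by lia.
    have E : (a + m = (a + m.-1).+1)%N by lia.
    by rewrite E tpt_prev.
  + move=> l l01; rewrite tpt_next tpt_mod.
    have [/= hx _] := hi; rewrite tpt_mod in hx; rewrite -hx.
    apply: (hm (lerp (tpt t (a+m)) (tpt t (a+m).+1) l)).
    by exists m, l.
Qed.
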